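(* Let $A$ be a set. Let $(G,S)$ and $(H,S)$ be two compatible $d$-labeled boundaried graphs, let $\mathcal{B}$ be the set of blocks of $G[S]$ with at least two vertices, and let $g:\mathcal{B}\to A$ be a function such that (i) each $S$-block of $G$ or $H$ is chordal, (ii) $\mathbf{Aux}(G,S)\oplus\mathbf{Aux}(H,S)$ has no cycles, and (iii) for all $B_1,B_2\in\mathcal{B}$ that are contained in a common $S$-block of $G$ or in a common $S$-block of $H$, $g(B_1)=g(B_2)$. If $F$ is an $S$-block of $(G,S)\oplus(H,S)$ and $B_1,B_2\in\mathcal{B}$ satisfy $V(B_1),V(B_2)\subseteq V(F)$, then $g(B_1)=g(B_2)$.
   Context: A block of a graph is a maximal connected subgraph without a cut vertex; a graph is chordal if it has no induced cycle of length at least $4$. A block $d$-labeling of a graph whose blocks have at most $d$ vertices is a map $V(G)\to[d]$ injective on each block; a $d$-labeled boundaried graph is a pair $(G,S)$ with $S\subseteq V(G)$ and $G$ carrying such a labeling. $(G,S)$ and $(H,S)$ are compatible if $V(G-S)\cap V(H-S)=\emptyset$, $G[S]=H[S]$, and labels agree on $S$. The sum $(G,S)\oplus(H,S)$ is the graph obtained from the disjoint union of $G$ and $H$ by identifying corresponding vertices of $S$ and removing duplicate edges inside $S$. An $S$-block of a graph containing $S$ is a block of it containing an edge of $G[S]$. $\mathbf{Aux}(G,S)$ is the bipartite graph whose vertices are the connected components of $G$ and the connected components of $G[S]$, a component $C_1$ of $G$ adjacent to a component $C_2$ of $G[S]$ iff $C_2\subseteq C_1$; $\mathbf{Aux}(G,S)\oplus\mathbf{Aux}(H,S)$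 is the disjoint union of $\mathbf{Aux}(G,S)$ and $\mathbf{Aux}(H,S)$ with the vertices corresponding to the same component of $G[S]=H[S]$ identified. *)

(* Defs.v *)
(* Graphs are finite simple graphs whose vertices live in a
   common finite universe T: a graph is a vertex set V : {set T} together with
   a symmetric irreflexive edge relation e : rel T (edges only inside V).
   A vertex subset X induces the subgraph G[X] with relation irel X e. *)
From mathcomp Require Import all_boot.
Set Implicit Arguments.
Unset Strict Implicit.
Unset Printing Implicit Defensive.

Section GraphDefs.
Variable T : finType.

Definition graph_wf (V : {set T}) (e : rel T) : Prop :=
  [/\ symmetric e, irreflexive e & forall x y, e x y -> x \in V /\ y \in V].

Definition irel (X : {set T}) (e : rel T) : rel T :=
  [rel x y | [&& x \in X, y \in X & e x y]].

Definition connected_in (X : {set T}) (e : rel T) : Prop :=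
  X != set0 /\ {in X &, forall x y, connect (irel X e) x y}.

Definition no_cut_vertex (X : {set T}) (e : rel T) : Prop :=
  forall v, v \in X -> {in X :\ v &, forall x y, connect (irel (X :\ v) e) x y}.

Definition conn_nocut (X : {set T}) (e : rel T) : Prop :=
  connected_in X e /\ no_cut_vertex X e.

Definition is_block (V : {set T}) (e : rel T) (X : {set T}) : Prop :=
  [/\ X \subset V, conn_nocut X e &
      forall Y : {set T}, X \proper Y -> Y \subset V -> ~ conn_nocut Y e].

Definition is_S_block (V : {set T}) (e : rel T) (S X : {set T}) : Prop :=
  is_block V e X /\
  exists x y, [/\ x \in S, y \in S, x \in X, y \in X & e x y].

(* G[X] is chordal: no induced cycle of length at least 4.  A cycle of length
   k is given by c 0, ..., c (k-1) (pairwise distinct, in X). *)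
Definition chordal (X : {set T}) (e : rel T) : Prop :=
  forall (k : nat) (c : nat -> T), 4 <= k ->
    (forall i j, i < k -> j < k -> c i = c j -> i = j) ->
    (forall i, i < k -> c i \in X) ->
    ~ (forall i j, i < k -> j < k ->
         e (c i) (c j) = (j == i.+1 %% k) || (i == j.+1 %% k)).

Definition is_component (V : {set T}) (e : rel T) (C : {set T}) : Prop :=
  exists2 x, x \in V & C = [set y in V | connect (irel V e) x y].

Definition block_labeling (d : nat) (V : {set T}) (e : rel T)
    (l : T -> 'I_d) : Prop :=
  forall X, is_block V e X -> {in X &, injective l}.

(* Vertices are tagged sets: AG C (C a component of G), AH C (C a component
   of H), AS C (C a component of G[S] = H[S], shared by both Aux graphs). *)
Inductive auxtag := AG | AH | AS.

Definition aux_vertex (VG : {set T}) (eG : rel T) (VH : {set T}) (eH : rel T)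
    (S : {set T}) (v : auxtag * {set T}) : Prop :=
  match v.1 with
  | AG => is_component VG eG v.2
  | AH => is_component VH eH v.2
  | AS => is_component S (irel S eG) v.2
  end.

Definition aux_edge (u v : auxtag * {set T}) : Prop :=
  (u.1 <> AS /\ v.1 = AS /\ v.2 \subset u.2) \/
  (v.1 <> AS /\ u.1 = AS /\ u.2 \subset v.2).

Definition aux_sum_acyclic (VG : {set T}) (eG : rel T) (VH : {set T})
    (eH : rel T) (S : {set T}) : Prop :=
  forall (k : nat) (c : nat -> auxtag * {set T}), 3 <= k ->
    (forall i j, i < k -> j < k -> c i = c j -> i = j) ->
    (forall i, i < k -> aux_vertex VG eG VH eH S (c i)) ->
    ~ (forall i, i < k -> aux_edge (c i) (c (i.+1 %% k))).

Definition sum_rel (eG eH : rel T) : rel T := [rel x y | eG x y || eH x y].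

End GraphDefs.

(* Main.v *)
Require Import Defs.
From mathcomp Require Import all_boot.
From Stdlib Require Import ClassicalEpsilon.
From mathcomp Require Import zify.
From Stdlib Require Import Lia.
Set Implicit Arguments.
Unset Strict Implicit.
Unset Printing Implicit Defensive.

Section Gen.
Variable T : finType.
Implicit Types (X Y V : {set T}) (e : rel T).

Lemma connect_mono (e1 e2 : rel T) :
  (forall x y, e1 x y -> e2 x y) -> forall x y, connect e1 x y -> connect e2 x y.
Proof.
move=> H x y /connectP[p pp ->]; apply/connectP; exists p => //.
exact: (sub_path (e:=e1) (e':=e2) H pp).
Qed.

Lemma irel_mono X Y e1 e2 : X \subset Y ->
  (forall x y, x \in X -> y \in X -> e1 x y -> e2 x y) ->
  forall x y, irel X e1 x y -> irel Y e2 x y.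
Proof.
move=> sXY H x y; rewrite /irel /= => /and3P[xX yX exy].
by apply/and3P; split; [apply: (subsetP sXY) | apply: (subsetP sXY) | apply: H].
Qed.

Lemma connect_irel_mono X Y e1 e2 : X \subset Y ->
  (forall x y, x \in X -> y \in X -> e1 x y -> e2 x y) ->
  forall x y, connect (irel X e1) x y -> connect (irel Y e2) x y.
Proof. by move=> sXY H; apply: connect_mono; apply: irel_mono. Qed.

Lemma connect_in X e x y : x \in X -> connect (irel X e) x y -> y \in X.
Proof.
move=> xX /connectP[p pp ->]; elim: p x xX pp => //= z p IH x xX /andP[/and3P[_ zX _] pp].
exact: IH zX pp.
Qed.

Lemma conn_nocut_mono X e1 e2 :
  (forall x y, x \in X -> y \in X -> e1 x y -> e2 x y) ->
  conn_nocut X e1 -> conn_nocut X e2.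
Proof.
move=> H [[ne cX] ncX]; split; first split => //.
  by move=> x y xX yX; apply: connect_irel_mono (cX x y xX yX) => //.
move=> v vX x y xv yv; apply: connect_irel_mono (ncX v vX x y xv yv) => //.
by move=> a b /setD1P[_ aX] /setD1P[_ bX]; apply: H.
Qed.

Lemma conn_minus X e v : conn_nocut X e ->
  {in X :\ v &, forall x y, connect (irel (X :\ v) e) x y}.
Proof.
move=> [[ne cX] ncX]; case vX: (v \in X); first exact: ncX.
have E : X :\ v = X.
  apply/setP => z; rewrite in_setD1; case zX: (z \in X); rewrite ?andbF //.
  by rewrite andbT; apply/eqP => zv; rewrite -zv zX in vX.
by rewrite E; exact: cX.
Qed.

Lemma conn_union X Y e a b : conn_nocut X e -> conn_nocut Y e ->
  a \in X -> a \in Y -> b \in X -> b \in Y -> a != b -> conn_nocut (X :|: Y) e.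
Proof.
move=> hX hY aX aY bX bY ab.
have [[neX cX] ncX] := hX; have [[neY cY] ncY] := hY.
split; first split.
- by apply/set0Pn; exists a; rewrite in_setU aX.
- have toa z : z \in X :|: Y -> connect (irel (X :|: Y) e) z a.
    case/setUP => [zX|zY].
      by apply: connect_irel_mono (cX z a zX aX) => //; apply: subsetUl.
    by apply: connect_irel_mono (cY z a zY aY) => //; apply: subsetUr.
  have froma z : z \in X :|: Y -> connect (irel (X :|: Y) e) a z.
    case/setUP => [zX|zY].
      by apply: connect_irel_mono (cX a z aX zX) => //; apply: subsetUl.
    by apply: connect_irel_mono (cY a z aY zY) => //; apply: subsetUr.
  by move=> x y xU yU; apply: connect_trans (toa x xU) (froma y yU).
- move=> v vU.
  pose c := if a == v then b else a.
  have cv : c != v.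
    rewrite /c; case: (a =P v) => [av|/eqP //]; by rewrite -av eq_sym.
  have cXX : c \in X by rewrite /c; case: ifP.
  have cYY : c \in Y by rewrite /c; case: ifP.
  have sX : X :\ v \subset (X :|: Y) :\ v by apply: setSD; apply: subsetUl.
  have sY : Y :\ v \subset (X :|: Y) :\ v by apply: setSD; apply: subsetUr.
  have cXv : c \in X :\ v by rewrite in_setD1 cv cXX.
  have cYv : c \in Y :\ v by rewrite in_setD1 cv cYY.
  have idr : forall x y, x \in X -> y \in X -> e x y -> e x y by [].
  have toc z : z \in (X :|: Y) :\ v -> connect (irel ((X :|: Y) :\ v) e) z c.
    case/setD1P => zv /setUP [zX|zY].
      have zXv : z \in X :\ v by rewrite in_setD1 zv zX.
      exact: connect_irel_mono sX (fun x y _ _ h => h) _ _ (conn_minus hX zXv cXv).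
    have zYv : z \in Y :\ v by rewrite in_setD1 zv zY.
    exact: connect_irel_mono sY (fun x y _ _ h => h) _ _ (conn_minus hY zYv cYv).
  have fromc z : z \in (X :|: Y) :\ v -> connect (irel ((X :|: Y) :\ v) e) c z.
    case/setD1P => zv /setUP [zX|zY].
      have zXv : z \in X :\ v by rewrite in_setD1 zv zX.
      exact: connect_irel_mono sX (fun x y _ _ h => h) _ _ (conn_minus hX cXv zXv).
    have zYv : z \in Y :\ v by rewrite in_setD1 zv zY.
    exact: connect_irel_mono sY (fun x y _ _ h => h) _ _ (conn_minus hY cYv zYv).
  by move=> x y xU yU; apply: connect_trans (toc x xU) (fromc y yU).
Qed.

Lemma block_ext V e X : conn_nocut X e -> X \subset V ->
  exists B, is_block V e B /\ X \subset B.
Proof.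
move=> hX sXV.
move: {2}(#|V| - #|X|) (leqnn (#|V| - #|X|)) => n.
elim: n X hX sXV => [|n IH] X hX sXV hn.
  exists X; split; last exact: subxx.
  split => // Y pXY sYV.
  have h2 := proper_card pXY; have h3 := subset_leq_card sYV.
  move: hn; rewrite leqn0 subn_eq0 => h1.
  by have := leq_ltn_trans h1 (leq_trans h2 h3); rewrite ltnn.
case: (classic (forall Y, X \proper Y -> Y \subset V -> ~ conn_nocut Y e)) => [H|].
  by exists X; split; last exact: subxx; split.
move=> H0; have [Y HY] := not_all_ex_not _ _ H0.
have [pXY HY2] := imply_to_and _ _ HY.
have [sYV HY3] := imply_to_and _ _ HY2.
have hY := NNPP _ HY3.
have [B [bB sYB]] : exists B, is_block V e B /\ Y \subset B.
  apply: (IH Y hY sYV).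
  have h1 := proper_card pXY; have h2 := subset_leq_card sYV.
  lia.
by exists B; split => //; apply: subset_trans (proper_sub pXY) sYB.
Qed.

Lemma block_sub V e X Y a b : is_block V e X -> conn_nocut Y e -> Y \subset V ->
  a \in X -> a \in Y -> b \in X -> b \in Y -> a != b -> Y \subset X.
Proof.
move=> [sXV hX mX] hY sYV aX aY bX bY ab.
case: (boolP (Y \subset X)) => // nYX; exfalso.
apply: (mX (X :|: Y)).
- rewrite properE subsetUl /=; apply: contra nYX => sUX.
  by apply: subset_trans sUX; apply: subsetUr.
- by rewrite subUset sXV sYV.
- exact: conn_union hX hY aX aY bX bY ab.
Qed.

Lemma block_conn V e X : is_block V e X -> conn_nocut X e.
Proof. by case. Qed.

Lemma block_subV V e X : is_block V e X -> X \subset V.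
Proof. by case. Qed.

Lemma block_eq V e X Y a b : is_block V e X -> is_block V e Y ->
  a \in X -> a \in Y -> b \in X -> b \in Y -> a != b -> X = Y.
Proof.
move=> bX bY aX aY bX' bY' ab; apply/eqP; rewrite eqEsubset.
rewrite (block_sub bX (block_conn bY) (block_subV bY) aX aY bX' bY' ab).
by rewrite (block_sub bY (block_conn bX) (block_subV bX) aY aX bY' bX' ab).
Qed.

End Gen.

Section Paths.
Variable T : finType.
Implicit Types (X Y V : {set T}) (e : rel T).

Fixpoint pp (l : seq T) : seq (T * T) :=
  match l with
  | x :: ((y :: _) as l') => (x, y) :: pp l'
  | _ => [::]
  end.

Lemma pp_cat a m b : pp (a ++ m :: b) = pp (rcons a m) ++ pp (m :: b).
Proof.
elim: a => [|x a IH] //=.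
by case: a IH => [|y a] /= IH //; rewrite IH.
Qed.

Lemma pp_mem l u v : (u, v) \in pp l -> (u \in l) && (v \in l).
Proof.
elim: l => [|x l IH] //=; case: l IH => [|y l] IH //=.
rewrite inE => /orP[/eqP[-> ->]|/IH]; first by rewrite !inE !eqxx orbT.
by rewrite !inE => /andP[-> ->]; rewrite !orbT.
Qed.

Lemma pp_path e x p u v : path e x p -> (u, v) \in pp (x :: p) -> e u v.
Proof.
elim: p x => [|y p IH] x //= /andP[exy py]; rewrite inE => /orP[/eqP[-> ->] //|].
exact: IH.
Qed.

Lemma pp_last a y z : (y, z) \in pp (rcons (rcons a y) z).
Proof.
elim: a => [|x a IH] /=; first by rewrite mem_head.
by case: a IH => [|w a] IH /=; rewrite inE IH orbT.
Qed.

Lemma pp_head x y b : (x, y) \in pp (x :: y :: b).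
Proof. by rewrite /= mem_head. Qed.

Definition cp (s : seq T) := if s is x :: p then pp (x :: rcons p x) else [::].

Lemma cp_rot A v B : cp (A ++ v :: B) =i cp (v :: B ++ A).
Proof.
case: A => [|x A]; first by rewrite cats0.
move=> uv.
change ((uv \in pp (x :: rcons (A ++ v :: B) x)) = (uv \in pp (v :: rcons (B ++ x :: A) v))).
have E1 : x :: rcons (A ++ v :: B) x = (x :: A) ++ v :: rcons B x by rewrite rcons_cat.
have E2 : v :: rcons (B ++ x :: A) v = (v :: B) ++ x :: rcons A v by rewrite rcons_cat.
by rewrite E1 E2 !pp_cat !mem_cat orbC.
Qed.

Lemma connect_irel_sym X e : symmetric e -> connect_sym (irel X e).
Proof.
move=> se; apply: sym_connect_sym => x y; rewrite /irel /= (se x y).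
by rewrite andbCA.
Qed.

Lemma path_irel X e x p : path e x p -> {subset x :: p <= X} -> path (irel X e) x p.
Proof.
elim: p x => [|y p IH] x //= /andP[exy py] sub.
apply/andP; split.
  apply/and3P; split => //; apply: sub; first exact: mem_head.
  by rewrite inE mem_head orbT.
by apply: (IH y py) => z zp; apply: sub; rewrite inE zp orbT.
Qed.

Lemma path_conn X e x p : symmetric e -> path e x p -> {subset x :: p <= X} ->
  {in x :: p &, forall y z, connect (irel X e) y z}.
Proof.
move=> se pp sub y z yp zp.
have pI := path_irel pp sub.
have cy := path_connect pI yp; have cz := path_connect pI zp.
rewrite connect_irel_sym // in cy.
exact: connect_trans cy cz.
Qed.

Lemma cycle_conn e s : symmetric e -> uniq s -> cycle e s -> 2 <= size s ->
  conn_nocut [set u in s] e.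
Proof.
move=> se us cs ss.
split; first split.
- by case: s ss {us cs} => [|x p] // _; apply/set0Pn; exists x; rewrite inE mem_head.
- case: s us cs ss => [|x p] // us cs ss.
  have px : path e x p by move: cs => /= ; rewrite rcons_path => /andP[].
  move=> y z; rewrite !inE => yp zp.
  by apply: path_conn px _ y z yp zp => // w wp; rewrite inE.
- move=> v; rewrite inE => vs; move: us cs ss; case/splitPr: vs => A B us cs ss.
  have cs' : cycle e (v :: B ++ A) by rewrite -cat_cons cycle_catC.
  have us' : uniq (v :: B ++ A) by rewrite -cat_cons uniq_catC.
  have eqm : (A ++ v :: B) =i (v :: B ++ A) by move=> w; rewrite -cat_cons mem_cat orbC -mem_cat.
  have sz : 1 <= size (B ++ A) by move: ss; rewrite !size_cat /=; lia.
  move: cs' us' sz eqm; case: (B ++ A) => [|h r] //= cs' /andP[vhr uhr] _ eqm.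
  move: cs' => /andP[evh]; rewrite rcons_path => /andP[phr _].
  have E : [set u in A ++ v :: B] :\ v = [set u in h :: r].
    apply/setP => w; rewrite in_setD1 !inE eqm inE.
    case: (w =P v) => [->|] /=; last done.
    by move: vhr; rewrite inE => /negbTE ->.
  rewrite E => y z yp zp.
  have yp' : y \in h :: r by move: yp; rewrite inE.
  have zp' : z \in h :: r by move: zp; rewrite inE.
  have sb : {subset h :: r <= [set u in h :: r]} by move=> w wp; rewrite inE.
  exact: (path_conn se phr sb yp' zp').
Qed.


Lemma rev_path_sym e x p y : symmetric e -> path e x (rcons p y) -> path e y (rcons (rev p) x).
Proof.
move=> se h.
have := rev_path e x (rcons p y); rewrite last_rcons belast_rcons rev_cons.
move=> ->; rewrite (@eq_path _ _ e) // => a b /=; rewrite se.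
Qed.

Lemma theta e x L1 y L2 I : symmetric e ->
  uniq (x :: L1 ++ y :: L2) -> cycle e (x :: L1 ++ y :: L2) ->
  path e x (rcons I y) -> uniq (x :: rcons I y) ->
  all (fun v => v \notin x :: L1 ++ y :: L2) I ->
  [/\ uniq (x :: L1 ++ y :: rev I), cycle e (x :: L1 ++ y :: rev I),
      uniq (y :: L2 ++ x :: I), cycle e (y :: L2 ++ x :: I) &
      [/\ forall uv, uv \in cp (x :: L1 ++ y :: L2) ->
            (uv \in cp (x :: L1 ++ y :: rev I)) || (uv \in cp (y :: L2 ++ x :: I)),
          (x, head y I) \in cp (y :: L2 ++ x :: I) &
          (head y I, x) \in cp (x :: L1 ++ y :: rev I)]].
Proof.
move=> se us cs pI uI dI.
have E0 : x :: L1 ++ y :: L2 = (x :: rcons L1 y) ++ L2 by rewrite -cat_rcons.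
have cs' : path e x (rcons L1 y) && path e y (rcons L2 x).
  move: cs; rewrite /= rcons_cat /= -cat_rcons cat_path last_rcons.
  by [].
case/andP: cs' => p1 p2.
have prev := rev_path_sym se pI.
have uI' : uniq I by move: uI; rewrite /= rcons_uniq => /and3P[_ _ ->].
have nI v : v \in I -> v \notin x :: L1 ++ y :: L2 by move=> vI; apply: (allP dI).
split.
- rewrite -cat_rcons -cat_cons cat_uniq rev_uniq uI' andbT.
  apply/andP; split.
    by move: us; rewrite E0 cat_uniq => /andP[].
  apply/hasPn => v; rewrite mem_rev => vI; have := nI v vI.
  by rewrite E0 mem_cat negb_or => /andP[].
- rewrite /= rcons_cat /= -cat_rcons cat_path last_rcons p1 /=.
  by [].
- rewrite -cat_rcons -cat_cons cat_uniq uI' andbT.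
  apply/andP; split.
    have : uniq (y :: L2 ++ x :: L1) by rewrite -cat_cons uniq_catC.
    by rewrite -cat_rcons -cat_cons cat_uniq => /andP[].
  apply/hasPn => v vI; have := nI v vI.
  rewrite !inE !mem_cat !inE mem_rcons inE; apply: contra.
  by case/orP => [->|/orP[->|->]]; rewrite ?orbT.
- rewrite /= rcons_cat /= -cat_rcons cat_path last_rcons p2 /=.
  by [].
split.
- move=> uv.
  change ((uv \in pp (x :: rcons (L1 ++ y :: L2) x)) ->
    (uv \in pp (x :: rcons (L1 ++ y :: rev I) x)) || (uv \in pp (y :: rcons (L2 ++ x :: I) y))).
  rewrite !rcons_cat !rcons_cons -!cat_cons !pp_cat !mem_cat.
  by case/orP => ->; rewrite ?orbT.
- change ((x, head y I) \in pp (y :: rcons (L2 ++ x :: I) y)).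
  rewrite rcons_cat rcons_cons -cat_cons pp_cat mem_cat; apply/orP; right.
  by case: I {pI uI dI prev uI' nI} => [|i I] /=; rewrite mem_head.
- change ((head y I, x) \in pp (x :: rcons (L1 ++ y :: rev I) x)).
  rewrite rcons_cat rcons_cons -cat_cons pp_cat mem_cat; apply/orP; right.
  case: I {pI uI dI prev uI' nI} => [|i I]; first by rewrite /= mem_head.
  by rewrite [head _ _]/= rev_cons -!rcons_cons; apply: pp_last.
Qed.

End Paths.

Lemma split_AB (U : eqType) (PA PB PZ : pred U) (Q : seq U) x :
  (forall y, y \in x :: Q -> PZ y -> PA y || PB y) ->
  (forall y, PA y -> ~~ PB y) -> (forall y, PB y -> PZ y) ->
  PA x -> PB (last x Q) ->
  exists Q1 z1 I z2 Q2, x :: Q = Q1 ++ z1 :: I ++ z2 :: Q2 /\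
    [/\ PA z1, PB z2 & all (predC PZ) I].
Proof.
move=> HZ HAB HBZ.
elim: Q x HZ => [|y Q IH] x HZ Ax /= Bl.
  by have := HAB x Ax; rewrite Bl.
case Zy: (PZ y).
  case By: (PB y).
    by exists [::], x, [::], y, Q; split.
  have yin : y \in x :: y :: Q by rewrite !inE eqxx orbT.
  have Ay : PA y by move: (HZ y yin Zy); rewrite By orbF.
  have HZ' : forall z, z \in y :: Q -> PZ z -> PA z || PB z.
    by move=> z zQ; apply: HZ; rewrite inE zQ orbT.
  have [Q1 [z1 [I [z2 [Q2 [E [h1 h2 h3]]]]]]] := IH y HZ' Ay Bl.
  by exists (x :: Q1), z1, I, z2, Q2; rewrite E.
have HZ' : forall z, z \in x :: Q -> PZ z -> PA z || PB z.
  move=> z; rewrite inE => /orP[/eqP->|zQ]; apply: HZ; first by rewrite mem_head.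
  by rewrite !inE zQ !orbT.
have Bl' : PB (last x Q).
  by case: Q {IH HZ HZ'} Bl => [|w Q] //= By; move: (HBZ _ By); rewrite Zy.
have [Q1 [z1 [I [z2 [Q2 [E [h1 h2 h3]]]]]]] := IH x HZ' Ax Bl'.
case: Q1 E => [|w Q1] /= [E1 E2].
  exists [::], z1, (y :: I), z2, Q2; split; first by rewrite E1 E2.
  by split => //=; rewrite Zy.
by exists (x :: y :: Q1), z1, I, z2, Q2; rewrite E1 E2.
Qed.

Definition pb (P : Prop) : bool := if excluded_middle_informative P then true else false.
Lemma pbP (P : Prop) : reflect P (pb P).
Proof. by rewrite /pb; case: excluded_middle_informative => h; constructor. Qed.

Lemma cycle_nth (U : eqType) (e : rel U) (s : seq U) x0 i :
  cycle e s -> i < size s -> e (nth x0 s i) (nth x0 s (i.+1 %% size s)).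
Proof.
case: s => [|x p] //= cs ilt.
have /pathP H := cs; have := H x0 i; rewrite size_rcons => /(_ ilt).
rewrite -rcons_cons !nth_rcons /=.
rewrite ilt.
case: (ltnP i (size p)) => [ip|pi].
  by rewrite modn_small //.
have -> : i = size p by lia.
by rewrite eqxx modnn.
Qed.

Section Aux.
Variable T : finType.
Variables (VG : {set T}) (eG : rel T) (VH : {set T}) (eH : rel T) (S : {set T}).
Hypothesis wfG : graph_wf VG eG.
Hypothesis wfH : graph_wf VH eH.
Hypothesis SG : S \subset VG.
Hypothesis SH : S \subset VH.
Hypothesis GHS : VG :&: VH \subset S.
Hypothesis agree : {in S &, forall x y, eG x y = eH x y}.
Hypothesis acyc : aux_sum_acyclic VG eG VH eH S.
Implicit Types (V X : {set T}) (e : rel T).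

Definition K := sum_rel eG eH.
Definition eS := irel S eG.

Lemma symG : symmetric eG. Proof. by case: wfG. Qed.
Lemma symH : symmetric eH. Proof. by case: wfH. Qed.
Lemma symK : symmetric K.
Proof. by move=> x y; rewrite /K /sum_rel /= symG symH. Qed.
Lemma symS : symmetric eS.
Proof. by move=> x y; rewrite /eS /irel /= symG andbCA. Qed.
Lemma inG x y : eG x y -> x \in VG /\ y \in VG. Proof. by case: wfG => _ _; apply. Qed.
Lemma inH x y : eH x y -> x \in VH /\ y \in VH. Proof. by case: wfH => _ _; apply. Qed.

Lemma notH x : x \in VG -> x \notin S -> x \notin VH.
Proof.
move=> xG xS; apply/negP => xH; move/negP: xS; apply.
by apply: (subsetP GHS); rewrite inE xG xH.
Qed.
Lemma notG x : x \in VH -> x \notin S -> x \notin VG.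
Proof.
move=> xH xS; apply/negP => xG; move/negP: xS; apply.
by apply: (subsetP GHS); rewrite inE xG xH.
Qed.

Definition N := ('I_3 * {set T})%type.
Definition t0 : 'I_3 := @Ordinal 3 0 isT.
Definition t1 : 'I_3 := @Ordinal 3 1 isT.
Definition t2 : 'I_3 := @Ordinal 3 2 isT.

Definition valid (n : N) : Prop :=
  match nat_of_ord n.1 with
  | 0 => is_component VG eG n.2
  | 1 => is_component VH eH n.2
  | _ => is_component S eS n.2
  end.

Definition aedge (u v : N) : Prop :=
  (val u.1 <> 2 /\ val v.1 = 2 /\ v.2 \subset u.2) \/
  (val v.1 <> 2 /\ val u.1 = 2 /\ u.2 \subset v.2).

Definition ar : rel N := fun u v => pb (valid u /\ valid v /\ aedge u v).

Lemma ar_sym : symmetric ar.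
Proof.
move=> u v; apply/pbP/pbP => -[hu [hv he]]; split => //; split => //;
  by case: he => he; [right|left].
Qed.

Definition toAux (n : N) : auxtag * {set T} :=
  (match nat_of_ord n.1 with 0 => AG | 1 => AH | _ => AS end, n.2).

Lemma toAux_AS n : ((toAux n).1 = AS) <-> (val n.1 = 2).
Proof.
case: n => [[[|[|[|k]]] hk] X] //=; split => //.
Qed.

Lemma toAux_inj : injective toAux.
Proof.
move=> [[a ha] X] [[b hb] Y]; rewrite /toAux /= => -[E1 E2]; subst Y.
congr (_, _); apply: val_inj => /=.
by move: ha hb E1; case: a => [|[|[|a]]]; case: b => [|[|[|b]]].
Qed.

Lemma toAux_vertex n : aux_vertex VG eG VH eH S (toAux n) <-> valid n.
Proof.
by case: n => [[[|[|[|k]]] hk] X].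
Qed.

Lemma toAux_edge u v : aux_edge (toAux u) (toAux v) <-> aedge u v.
Proof.
rewrite /aux_edge /aedge.
have Hu := toAux_AS u; have Hv := toAux_AS v.
have E1 : (toAux u).2 = u.2 by []. have E2 : (toAux v).2 = v.2 by [].
rewrite E1 E2.
split => -[[h1 [h2 h3]]|[h1 [h2 h3]]].
- by left; split; [move=> h; apply: h1; apply/Hu | split => //; apply/Hv].
- by right; split; [move=> h; apply: h1; apply/Hv | split => //; apply/Hu].
- by left; split; [move=> h; apply: h1; apply/Hu | split => //; apply/Hv].
- by right; split; [move=> h; apply: h1; apply/Hv | split => //; apply/Hu].
Qed.

Lemma no_ar_cycle (s : seq N) : uniq s -> 3 <= size s -> cycle ar s -> False.
Proof.
move=> us ss cs.
pose n0 : N := (t0, set0).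
apply: (acyc (k := size s) (c := fun i => toAux (nth n0 s i))) => //.
- move=> i j ilt jlt /toAux_inj E.
  by move/eqP: E; rewrite nth_uniq // => /eqP.
- move=> i ilt; apply/toAux_vertex.
  by have /pbP [] := cycle_nth n0 cs ilt.
- move=> i ilt; apply/toAux_edge.
  by have /pbP [_ []] := cycle_nth n0 cs ilt.
Qed.


Definition compX (V : {set T}) (e : rel T) v := [set y in V | connect (irel V e) v y].

Lemma comp_is V e v : v \in V -> is_component V e (compX V e v).
Proof. by move=> vV; exists v. Qed.

Lemma comp_self V e v : v \in V -> v \in compX V e v.
Proof. by move=> vV; rewrite inE vV connect0. Qed.

Lemma comp_same V e u v : symmetric e -> connect (irel V e) u v -> compX V e u = compX V e v.
Proof.
move=> se cuv; apply/setP => y; rewrite !inE; case: (y \in V) => //=.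
apply/idP/idP => h; first by apply: connect_trans _ h; rewrite connect_irel_sym.
exact: connect_trans cuv h.
Qed.

Lemma comp_eq V e X c : symmetric e -> is_component V e X -> c \in X -> X = compX V e c.
Proof.
move=> se [x0 x0V ->]; rewrite inE => /andP[cV cc].
by rewrite -/(compX V e x0); apply: comp_same.
Qed.

Definition node_of (v : T) : N :=
  if v \in S then (t2, compX S eS v)
  else if v \in VG then (t0, compX VG eG v) else (t1, compX VH eH v).

Lemma node_valid v : v \in VG :|: VH -> valid (node_of v).
Proof.
rewrite /node_of inE => vGH; case: ifP => vS; first by rewrite /valid /=; apply: comp_is.
case: ifP => vG /=; first by rewrite /valid /=; apply: comp_is.
by rewrite /valid /=; apply: comp_is; move: vGH; rewrite vG.
Qed.

Lemma eS_eG x y : eS x y -> eG x y. Proof. by case/and3P. Qed.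
Lemma eS_eH x y : eS x y -> eH x y.
Proof. by case/and3P => xS yS; rewrite agree. Qed.

Lemma node_step_S u v : u \in S -> v \notin S -> K u v ->
  ar (node_of u) (node_of v).
Proof.
move=> uS vS /orP[e|e].
- have [uG vG] := inG e.
  have -> : node_of u = (t2, compX S eS u) by rewrite /node_of uS.
  have -> : node_of v = (t0, compX VG eG v) by rewrite /node_of (negbTE vS) vG.
  apply/pbP; split; first exact: comp_is.
  split; first exact: comp_is.
  right; split => //; split => //.
  apply/subsetP => y; rewrite !inE => /andP[yS cy]; rewrite (subsetP SG _ yS) /=.
  have cvu : connect (irel VG eG) v u by apply: connect1; rewrite /irel /= vG uG symG.
  apply: connect_trans cvu _; apply: connect_irel_mono cy => //.
  by move=> a b _ _; apply: eS_eG.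
- have [uH vH] := inH e.
  have vG : v \notin VG by apply: notG.
  have -> : node_of u = (t2, compX S eS u) by rewrite /node_of uS.
  have -> : node_of v = (t1, compX VH eH v) by rewrite /node_of (negbTE vS) (negbTE vG).
  apply/pbP; split; first exact: comp_is.
  split; first exact: comp_is.
  right; split => //; split => //.
  apply/subsetP => y; rewrite !inE => /andP[yS cy]; rewrite (subsetP SH _ yS) /=.
  have cvu : connect (irel VH eH) v u by apply: connect1; rewrite /irel /= vH uH symH.
  apply: connect_trans cvu _; apply: connect_irel_mono cy => //.
  by move=> a b _ _; apply: eS_eH.
Qed.

Lemma node_step u v : K u v -> node_of u = node_of v \/ ar (node_of u) (node_of v).
Proof.
move=> kuv.
case uS: (u \in S); case vS: (v \in S).
- left; rewrite /node_of uS vS; congr (_, _); apply: comp_same; first exact: symS.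
  apply: connect1; rewrite /eS /irel /= uS vS /=.
  by case/orP: kuv => // e; rewrite agree.
- by right; apply: node_step_S => //; rewrite vS.
- by right; rewrite ar_sym; apply: node_step_S; rewrite ?uS // symK.
- left; case/orP: kuv => e.
  + have [uG vG] := inG e.
    rewrite /node_of uS vS uG vG; congr (_, _); apply: comp_same; first exact: symG.
    by apply: connect1; rewrite /irel /= uG vG e.
  + have [uH vH] := inH e.
    have uG : u \notin VG by apply: notG; rewrite ?uS.
    have vG : v \notin VG by apply: notG; rewrite ?vS.
    rewrite /node_of uS vS (negbTE uG) (negbTE vG); congr (_, _); apply: comp_same; first exact: symH.
    by apply: connect1; rewrite /irel /= uH vH e.
Qed.

Definition ar_av (F : pred N) : rel N := fun a b => ar a b && ~~ F a && ~~ F b.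

Lemma ar_av_sym F : symmetric (ar_av F).
Proof. by move=> a b; rewrite /ar_av ar_sym andbAC -andbA andbCA andbA. Qed.

Lemma K_in u v : K u v -> (u \in VG :|: VH) && (v \in VG :|: VH).
Proof.
by case/orP => e; [have [a b] := inG e | have [a b] := inH e]; rewrite !inE a b ?orbT.
Qed.

Lemma path_nodes F x q : path K x q -> (forall v, v \in x :: q -> ~~ F (node_of v)) ->
  connect (ar_av F) (node_of x) (node_of (last x q)).
Proof.
elim: q x => [|y q IH] x /=; first by rewrite connect0.
move=> /andP[kxy pq] nF.
have nF' : forall v, v \in y :: q -> ~~ F (node_of v) by move=> v vq; apply: nF; rewrite inE vq orbT.
have IH' := IH y pq nF'.
case: (node_step kxy) => [->|a] //.
apply: connect_trans IH'; apply: connect1.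
by rewrite /ar_av a nF ?mem_head // nF // inE mem_head orbT.
Qed.

Lemma path_av F x p : path ar x p -> (forall v, v \in x :: p -> ~~ F v) -> path (ar_av F) x p.
Proof.
elim: p x => [|y p IH] x //= /andP[a pp] nF.
have nF' : forall v, v \in y :: p -> ~~ F v by move=> v vp; apply: nF; rewrite inE vp orbT.
apply/andP; split; last exact: IH pp nF'.
by rewrite /ar_av a nF ?mem_head // nF'  ?mem_head.
Qed.

Lemma path_av_mem F x p : path (ar_av F) x p -> p != [::] -> forall v, v \in x :: p -> ~~ F v.
Proof.
elim: p x => [|y p IH] x //= /andP[/andP[/andP[_ fx] fy] pp] _ v.
rewrite inE => /orP[/eqP ->//|].
case: p IH pp => [|z p] IH pp; first by rewrite inE => /eqP ->.
by apply: IH.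
Qed.

Lemma path_av_ar F x p : path (ar_av F) x p -> path ar x p.
Proof. by apply: sub_path => a b /andP[/andP[]]. Qed.

Lemma node_in v c : node_of v = c -> val c.1 = 2 -> v \in c.2.
Proof.
rewrite /node_of; case: ifP => vS; first by move=> <- _ /=; apply: comp_self.
by case: ifP => _ <-.
Qed.

Lemma sep g h q : g \in VG -> g \notin S -> h \in VH -> h \notin S ->
  path K g q -> last g q = h ->
  exists C, is_component S eS C /\
    forall q', path K g q' -> last g q' = h -> has (mem C) q'.
Proof.
move=> gG gS hH hS pq lq.
have hG : h \notin VG by apply: notG.
have ng : node_of g = (t0, compX VG eG g) by rewrite /node_of (negbTE gS) gG.
have nh : node_of h = (t1, compX VH eH h) by rewrite /node_of (negbTE hS) (negbTE hG).
have c1 : connect ar (node_of g) (node_of h).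
  have := @path_nodes pred0 g q pq (fun _ _ => isT); rewrite lq.
  by apply: connect_mono => a b /andP[/andP[]].
move: c1 => /connectP [p0 pth0 lst0].
move: lst0; case/shortenP: pth0 => p pth up _ lst.
case: p pth up lst => [|c p1] pth up lst.
  by move: lst; rewrite /= ng nh => -[].
move: pth => /= /andP[ac pth].
have [vc [_ ec]] : valid c /\ valid (node_of g) /\ aedge (node_of g) c by have := ac; move/pbP => [? [? ?]].
have c2 : val c.1 = 2.
  by case: ec => -[h1 [h2 h3]] //; move: h2; rewrite ng.
have vC : is_component S eS c.2 by move: vc; rewrite /valid c2.
case: p1 pth up lst => [|n1 p2] pth up lst.
  by move: lst c2 => /= <-; rewrite nh.
move: pth => /= /andP[acn pth].
have [_ [vn en]] : valid c /\ valid n1 /\ aedge c n1 by have := acn; move/pbP.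
have [n1ne2 sCn] : val n1.1 <> 2 /\ c.2 \subset n1.2.
  by case: en => -[h1 [h2 h3]] //.
have n1g : n1 != node_of g.
  by move: up; rewrite /= !inE negb_or => /andP[/andP[_ /negP hh] _]; apply/eqP => E; apply: hh; rewrite E eqxx.
have n11 : val n1.1 = 1.
  have := ltn_ord n1.1; move: n1ne2 vn.
  rewrite /valid; case E: (nat_of_ord n1.1) => [|[|[|k]]] //= _ vn _.
  exfalso; move/negP: n1g; apply.
  have [x0 x0S Ex0] := vC.
  have x0C : x0 \in c.2 by rewrite Ex0 inE x0S connect0.
  have E1 := comp_eq symG vn (subsetP sCn _ x0C).
  have sCg : c.2 \subset compX VG eG g by case: ec => -[h1 [h2 h3]] //; move: h3; rewrite ng.
  have E2 := comp_eq symG (comp_is eG gG) (subsetP sCg _ x0C).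
  rewrite ng; apply/eqP; clear -E E1 E2; case: n1 E E1 => t Y /= E ->.
  by rewrite -E2; congr (_, _); apply: val_inj.
exists c.2; split => // q' pq' lq'.
apply/negPn/negP => hq.
have nC : forall v, v \in g :: q' -> ~~ pred1 c (node_of v).
  move=> v; rewrite inE => /orP[/eqP ->|vq]; apply/negP => /eqP E.
    by move: (node_in E c2) => gC; move: vC => [x0 x0S Ex0]; move: gC; rewrite Ex0 inE (negbTE gS).
  by move/negP: hq; apply; apply/hasP; exists v => //; apply: node_in E c2.
have c2' := path_nodes pq' nC; rewrite lq' in c2'.
have nc : c \notin n1 :: p2 by move: up => /= /andP[_ /andP[]].
have c3 : connect (ar_av (pred1 c)) n1 (node_of h).
  apply/connectP; exists p2; last by [].
  apply: path_av pth _ => v vp; apply/negP => /eqP E; move/negP: nc; apply; by rewrite -E.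
have c4 : connect (ar_av (pred1 c)) (node_of g) n1.
  apply: connect_trans c2' _; by rewrite (sym_connect_sym (ar_av_sym _)).
move: c4 => /connectP [r0 pr0 lr0]; move: lr0; case/shortenP: pr0 => r pr ur _ lr.
have rne : r != [::] by case: r pr ur lr => // _ _ /= E; move/eqP: n1g; rewrite E.
have cnot : c \notin node_of g :: r.
  apply/negP => cin; have := path_av_mem pr rne cin; by rewrite /= eqxx.
apply: (@no_ar_cycle [:: c, node_of g & r]).
- by rewrite cons_uniq cnot ur.
- by case: r rne {pr ur lr cnot}.
- rewrite /= ar_sym ac /= rcons_path (path_av_ar pr) /= -lr ar_sym acn.
  done.
Qed.

Definition piece P := is_block VG eG P \/ is_block VH eH P.
Definition gsb B := is_block S eS B /\ 1 < #|B|.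
Definition link : rel {set T} := fun P Q =>
  pb (piece P /\ piece Q /\ exists B, gsb B /\ B \subset P /\ B \subset Q).
Definition pc u v P := piece P /\ u \in P /\ v \in P.

Lemma link_sym : symmetric link.
Proof.
move=> P Q; apply/pbP/pbP => -[hP [hQ [B [hB [h1 h2]]]]]; do !split => //;
  by exists B.
Qed.

Lemma connect_link_sym : connect_sym link.
Proof. exact: sym_connect_sym link_sym. Qed.

Lemma two_conn e u v : symmetric e -> e u v -> u != v -> conn_nocut [set w in [:: u; v]] e.
Proof.
move=> se euv uv; apply: cycle_conn => //=.
  by rewrite inE andbT.
by rewrite euv se euv.
Qed.

Lemma irrG u v : eG u v -> u != v.
Proof. by case: wfG => _ irr _ e; apply/eqP => E; move: e; rewrite E irr. Qed.
Lemma irrH u v : eH u v -> u != v.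
Proof. by case: wfH => _ irr _ e; apply/eqP => E; move: e; rewrite E irr. Qed.

Lemma card2_le (B : {set T}) u v : u \in B -> v \in B -> u != v -> 1 < #|B|.
Proof.
move=> uB vB uv; apply: (@leq_trans #|[set u; v]|); first by rewrite cards2 uv.
by apply: subset_leq_card; apply/subsetP => w; rewrite !inE => /orP[]/eqP->.
Qed.

Lemma gsb_sub B P u v : gsb B -> piece P -> u \in B -> v \in B -> u \in P -> v \in P ->
  u != v -> B \subset P.
Proof.
move=> [bB _] [hP|hP] uB vB uP vP uv.
- apply: (block_sub hP) uP uB vP vB uv.
    apply: conn_nocut_mono (block_conn bB) => a b _ _; exact: eS_eG.
  by apply: subset_trans (block_subV bB) SG.
- apply: (block_sub hP) uP uB vP vB uv.
    apply: conn_nocut_mono (block_conn bB) => a b _ _; exact: eS_eH.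
  by apply: subset_trans (block_subV bB) SH.
Qed.

Lemma Sedge_gsb u v : u \in S -> v \in S -> eG u v -> exists B, [/\ gsb B, u \in B & v \in B].
Proof.
move=> uS vS e.
have uv := irrG e.
have es : eS u v by rewrite /eS /irel /= uS vS e.
have sub : [set w in [:: u; v]] \subset S by apply/subsetP => w; rewrite !inE => /orP[]/eqP->.
have [B [bB sB]] := block_ext (two_conn symS es uv) sub.
have uB : u \in B by apply: (subsetP sB); rewrite !inE eqxx.
have vB : v \in B by apply: (subsetP sB); rewrite !inE eqxx orbT.
by exists B; split => //; split => //; apply: card2_le uB vB uv.
Qed.

Lemma link_Sedge u v P Q : u \in S -> v \in S -> eG u v -> pc u v P -> pc u v Q -> link P Q.
Proof.
move=> uS vS e [pP [uP vP]] [pQ [uQ vQ]].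
have [B [gB uB vB]] := Sedge_gsb uS vS e.
apply/pbP; split => //; split => //; exists B; split => //.
by split; apply: (gsb_sub gB) uB vB _ _ (irrG e).
Qed.

Lemma edge_piece u v : K u v -> exists P, pc u v P.
Proof.
case/orP => e.
- have [uG vG] := inG e.
  have sub : [set w in [:: u; v]] \subset VG by apply/subsetP => w; rewrite !inE => /orP[]/eqP->.
  have [X [bX sX]] := block_ext (two_conn symG e (irrG e)) sub.
  by exists X; split; [left|split; apply: (subsetP sX); rewrite !inE eqxx ?orbT].
- have [uH vH] := inH e.
  have sub : [set w in [:: u; v]] \subset VH by apply/subsetP => w; rewrite !inE => /orP[]/eqP->.
  have [X [bX sX]] := block_ext (two_conn symH e (irrH e)) sub.
  by exists X; split; [right|split; apply: (subsetP sX); rewrite !inE eqxx ?orbT].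
Qed.

Lemma pp_K s u v : cycle K s -> (u, v) \in cp s -> [/\ K u v, u \in s & v \in s].
Proof.
case: s => [|x p] // cs uv.
have cs' : path K x (rcons p x) := cs.
have uv' : (u, v) \in pp (x :: rcons p x) := uv.
have := pp_path cs' uv' => k.
have := pp_mem uv' => /andP[].
rewrite !inE !mem_rcons !inE => hu hv; split => //; [move: hu | move: hv]; by rewrite orbA orbb.
Qed.

Definition cyc_ok s := exists R, forall u v P, (u, v) \in cp s -> pc u v P -> connect link P R.

Lemma cyc_G s : uniq s -> 2 <= size s -> cycle K s -> all (mem VG) s -> cyc_ok s.
Proof.
move=> us ss cs aG.
have subK : {in mem VG &, subrel K eG}.
  move=> u v uG vG /orP[//|e]; have [uH vH] := inH e.
  have uS : u \in S by apply: (subsetP GHS); rewrite inE uG uH.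
  have vS : v \in S by apply: (subsetP GHS); rewrite inE vG vH.
  by rewrite agree.
have cG : cycle eG s := sub_in_cycle subK aG cs.
have sub : [set w in s] \subset VG by apply/subsetP => w; rewrite inE => ws; apply: (allP aG).
have [X [bX sX]] := block_ext (cycle_conn symG us cG ss) sub.
  exists X => u v P uv [pP [uP vP]].
  have [k us' vs'] := pp_K cs uv.
  have uX : u \in X by apply: (subsetP sX); rewrite inE.
  have vX : v \in X by apply: (subsetP sX); rewrite inE.
  have uG : u \in VG by apply: (allP aG).
  have vG : v \in VG by apply: (allP aG).
  have e : eG u v by apply: subK.
  case: pP => hP.
    by rewrite (block_eq hP bX uP uX vP vX (irrG e)) connect0.
  have uS : u \in S by apply: (subsetP GHS); rewrite inE uG (subsetP (block_subV hP) _ uP).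
  have vS : v \in S by apply: (subsetP GHS); rewrite inE vG (subsetP (block_subV hP) _ vP).
  apply: connect1; apply: (link_Sedge uS vS e).
  - by split; [right | split].
  - by split; [left | split].
Qed.

Lemma cyc_H s : uniq s -> 2 <= size s -> cycle K s -> all (mem VH) s -> cyc_ok s.
Proof.
move=> us ss cs aH.
have subK : {in mem VH &, subrel K eH}.
  move=> u v uH vH /orP[e|//]; have [uG vG] := inG e.
  have uS : u \in S by apply: (subsetP GHS); rewrite inE uG uH.
  have vS : v \in S by apply: (subsetP GHS); rewrite inE vG vH.
  by rewrite -agree.
have cH : cycle eH s := sub_in_cycle subK aH cs.
have sub : [set w in s] \subset VH by apply/subsetP => w; rewrite inE => ws; apply: (allP aH).
have [X [bX sX]] := block_ext (cycle_conn symH us cH ss) sub.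
  exists X => u v P uv [pP [uP vP]].
  have [k us' vs'] := pp_K cs uv.
  have uX : u \in X by apply: (subsetP sX); rewrite inE.
  have vX : v \in X by apply: (subsetP sX); rewrite inE.
  have uH : u \in VH by apply: (allP aH).
  have vH : v \in VH by apply: (allP aH).
  have e : eH u v by apply: subK.
  case: pP => hP; last first.
    by rewrite (block_eq hP bX uP uX vP vX (irrH e)) connect0.
  have uS : u \in S by apply: (subsetP GHS); rewrite inE uH (subsetP (block_subV hP) _ uP).
  have vS : v \in S by apply: (subsetP GHS); rewrite inE vH (subsetP (block_subV hP) _ vP).
  have e' : eG u v by rewrite agree.
  apply: connect1; apply: (link_Sedge uS vS e').
  - by split; [left | split].
  - by split; [right | split].
Qed.

Lemma cyc_rot A v B : cyc_ok (v :: B ++ A) -> cyc_ok (A ++ v :: B).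
Proof. by move=> [R H]; exists R => u w P uw; apply: H; rewrite -cp_rot. Qed.

Definition nS : pred T := fun v => v \notin S.

Lemma path_in x q : path K x q -> q != [::] -> {subset x :: q <= VG :|: VH}.
Proof.
elim: q x => [|y q IH] x //= /andP[k pq] _ u.
have /andP[xin yin] := K_in k.
rewrite inE => /orP[/eqP->//|].
case: q IH pq => [|z q] IH pq; first by rewrite inE => /eqP->.
by apply: IH.
Qed.

Lemma split_in (U : eqType) (x : U) l : x \in l -> exists l1 l2, l = l1 ++ x :: l2.
Proof. by case/splitPr => l1 l2; exists l1, l2. Qed.

Lemma mixed0 g A h B :
  (forall s', uniq s' -> 3 <= size s' -> cycle K s' ->
     count nS s' < count nS (g :: A ++ h :: B) -> cyc_ok s') ->
  uniq (g :: A ++ h :: B) -> cycle K (g :: A ++ h :: B) ->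
  g \in VG -> g \notin S -> h \in VH -> h \notin S -> cyc_ok (g :: A ++ h :: B).
Proof.
move=> IH us cs gG gS hH hS.
have cs' : path K g (rcons A h) && path K h (rcons B g).
  by move: cs; rewrite /cycle rcons_cat rcons_cons -cat_rcons cat_path last_rcons.
case/andP: cs' => p1 p2'.
have p2 := rev_path_sym symK p2'.
have [C [vC hC]] := sep gG gS hH hS p1 (last_rcons _ _ _).
have [x0 x0S EC] := vC.
have CS : {subset C <= S} by move=> y; rewrite EC inE => /andP[].
have [a aA aC] : exists2 a, a \in A & a \in C.
  have /hasP [a ain aC] := hC _ p1 (last_rcons _ _ _).
  exists a => //; move: ain; rewrite mem_rcons inE => /orP[/eqP E|//].
  by move: (CS _ aC); rewrite E (negbTE hS).
have [b bB bC] : exists2 b, b \in B & b \in C.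
  have /hasP [b bin bC] := hC _ p2 (last_rcons _ _ _).
  exists b => //; move: bin; rewrite mem_rcons inE mem_rev => /orP[/eqP E|//].
  by move: (CS _ bC); rewrite E (negbTE hS).
have sym' := connect_irel_sym S symS.
have cx0a : connect (irel S eS) x0 a by move: aC; rewrite EC inE => /andP[].
have cx0b : connect (irel S eS) x0 b by move: bC; rewrite EC inE => /andP[].
have cab : connect (irel S eS) a b by apply: connect_trans cx0b; rewrite sym'.
move: cab => /connectP [Q0 pQ0 lQ0]; move: lQ0; case/shortenP: pQ0 => Q pQ uQ _ lQ.
have QC : {subset a :: Q <= C}.
  move=> y yQ; have := path_connect pQ yQ => cay.
  have cx0y := connect_trans cx0a cay.
  by rewrite EC inE cx0y (connect_in x0S cx0y).
have QK : path K a Q.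
  apply: sub_path pQ => u v /and3P[_ _ e]; apply/orP; left; exact: eS_eG e.
set s := g :: A ++ h :: B.
have nsC y : y \in C -> (y != g) && (y != h).
  move=> yC; have yS := CS _ yC.
  by apply/andP; split; apply/eqP => E; move: yS; rewrite E ?(negbTE gS) ?(negbTE hS).
have uAB : ~~ has (mem A) (h :: B) by move: us; rewrite /s cons_uniq cat_uniq => /andP[_ /and3P[]].
have [Q1 [z1 [I [z2 [Q2 [E [z1A z2B aI]]]]]]] :
    exists Q1 z1 I z2 Q2, a :: Q = Q1 ++ z1 :: I ++ z2 :: Q2 /\
      [/\ (mem A) z1, (mem B) z2 & all (predC (mem s)) I].
  apply: split_AB => //.
  - move=> y yQ; have /andP[yg yh] := nsC y (QC y yQ).
    change ((y \in g :: A ++ h :: B) -> (y \in A) || (y \in B)).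
    by rewrite inE (negbTE yg) /= mem_cat inE (negbTE yh).
  - move=> y; change ((y \in A) -> ~~ (y \in B)) => yA.
    apply/negP => yB; move/hasP: uAB; apply; exists y => //.
    by rewrite inE yB orbT.
  - move=> y; change ((y \in B) -> (y \in g :: A ++ h :: B)) => yB.
    by rewrite inE mem_cat inE yB !orbT.
  - by rewrite /= -lQ.
have pI : path K z1 (rcons I z2).
  have : sorted K (a :: Q) by [].
  rewrite E sorted_cat_cons => /andP[_]; rewrite -cat_rcons cat_path => /andP[] //.
have uI : uniq (z1 :: rcons I z2).
  move: uQ; rewrite E cat_uniq => /and3P[_ _]; rewrite -cat_rcons -cat_cons cat_uniq.
  by case/andP.
have IC : {subset I <= C}.
  by move=> y yI; apply: QC; rewrite E mem_cat inE mem_cat yI !orbT.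
have [A1 [A2 EA]] := split_in z1A.
have [B1 [B2 EB]] := split_in z2B.
have [L1 EL1] : exists L1, L1 = A2 ++ h :: B1 by exists (A2 ++ h :: B1).
have [L2 EL2] : exists L2, L2 = B2 ++ g :: A1 by exists (B2 ++ g :: A1).
have Es : s = (g :: A1) ++ z1 :: (L1 ++ z2 :: B2) by rewrite /s EL1 EA EB -!catA.
set s' := z1 :: L1 ++ z2 :: L2.
have Es' : s' = z1 :: (L1 ++ z2 :: B2) ++ (g :: A1) by rewrite /s' EL2 -!catA.
have ss' : s =i s' by move=> y; rewrite Es Es' -cat_cons mem_cat orbC -mem_cat.
have us' : uniq s' by rewrite Es' -cat_cons uniq_catC -Es.
have cs'' : cycle K s' by rewrite Es' -cat_cons cycle_catC -Es.
have cps : cp s =i cp s' by rewrite Es Es'; apply: cp_rot.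
have cnt : count nS s = count nS s' by apply/permP; rewrite Es Es' perm_catC.
have aI' : all (fun v => v \notin z1 :: L1 ++ z2 :: L2) I.
  apply/allP => y yI; have := allP aI y yI; by rewrite /= -/s' -ss'.
have [uZ1 cZ1 uZ2 cZ2 [hcp hX2 hX1]] := theta symK us' cs'' pI uI aI'.
have I0 : count nS I = 0.
  apply/eqP; rewrite -leqn0 leqNgt -has_count; apply/hasPn => y yI.
  by rewrite /nS (CS _ (IC _ yI)).
have hL1 : h \in L1 by rewrite EL1 mem_cat inE eqxx orbT.
have gL2 : g \in L2 by rewrite EL2 mem_cat inE eqxx orbT.
have cL1 : 0 < count nS L1 by rewrite -has_count; apply/hasP; exists h.
have cL2 : 0 < count nS L2 by rewrite -has_count; apply/hasP; exists g.
have [R1 H1] : cyc_ok (z1 :: L1 ++ z2 :: rev I).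
  apply: IH => //.
    rewrite /= size_cat /= addnS !ltnS; apply: (leq_trans _ (leq_addr _ _)).
    exact: leq_trans cL1 (count_size _ _).
  rewrite cnt /s' /= !count_cat /= count_rev I0.
  clear -cL2; lia.
have [R2 H2] : cyc_ok (z2 :: L2 ++ z1 :: I).
  apply: IH => //.
    rewrite /= size_cat /= addnS !ltnS; apply: (leq_trans _ (leq_addr _ _)).
    exact: leq_trans cL2 (count_size _ _).
  rewrite cnt /s' /= !count_cat /= I0.
  clear -cL1; lia.
have Kq : K z1 (head z2 I).
  by move: pI; clear; case: I => [|i I] /= /andP[].
have [Xe [pXe [z1X qX]]] := edge_piece Kq.
have C1 : connect link Xe R1 by apply: H1 hX1 _; split.
have C2 : connect link Xe R2 by apply: H2 hX2 _; split.
have C12 : connect link R1 R2 by apply: connect_trans C2; rewrite connect_link_sym.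
exists R2 => u v P uv hP.
have := hcp (u, v); rewrite -cps => /(_ uv) /orP[u1|u2].
  exact: connect_trans (H1 u v P u1 hP) C12.
exact: H2 u v P u2 hP.
Qed.

Lemma cyc_in s : cycle K s -> 2 <= size s -> {subset s <= VG :|: VH}.
Proof.
case: s => [|x p] // cs ss u us.
apply: (path_in cs); first by rewrite -size_eq0 size_rcons.
by move: us; rewrite !inE mem_rcons !inE => /orP[->|->]; rewrite ?orbT.
Qed.

Lemma mixed s g h :
  (forall s', uniq s' -> 3 <= size s' -> cycle K s' -> count nS s' < count nS s -> cyc_ok s') ->
  uniq s -> 3 <= size s -> cycle K s ->
  g \in s -> g \notin VH -> h \in s -> h \notin VG -> cyc_ok s.
Proof.
move=> IH us ss cs gs gH hs hG.
have sGH := cyc_in cs (ltnW ss).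
have gG : g \in VG by move: (sGH _ gs); rewrite inE (negbTE gH) orbF.
have hH : h \in VH by move: (sGH _ hs); rewrite inE (negbTE hG).
have gS : g \notin S by apply: contra gH; apply: (subsetP SH).
have hS : h \notin S by apply: contra hG; apply: (subsetP SG).
have hg : h != g by apply/eqP => E; move: hG; rewrite E gG.
have [A0 [B0 E0]] := split_in gs.
have hBA : h \in B0 ++ A0.
  by move: hs; rewrite E0 !mem_cat inE (negbTE hg) /= orbC.
have [A [B E1]] := split_in hBA.
have pe : perm_eq s (g :: A ++ h :: B) by rewrite E0 -E1 -cat_cons perm_catC.
rewrite E0; apply: cyc_rot; rewrite E1.
apply: mixed0 => //.
- by move=> s' u' s3 c' cnt; apply: IH => //; rewrite (permP pe).
- by rewrite -(perm_uniq pe).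
- by rewrite -E1 -cat_cons cycle_catC -E0.
Qed.

Lemma CL n s : uniq s -> 3 <= size s -> cycle K s -> count nS s <= n -> cyc_ok s.
Proof.
elim: n s => [|n IHn] s us ss cs cnt.
  case aG: (all (mem VG) s); first exact: cyc_G (ltnW ss) cs aG.
  case aH: (all (mem VH) s); first exact: cyc_H (ltnW ss) cs aH.
  move/negbT/allPn: aG => [h hs hG]; move/negbT/allPn: aH => [g gs gH].
  apply: (mixed _ us ss cs gs gH hs hG) => s' _ _ _.
  by move: cnt; rewrite leqn0 => /eqP ->; rewrite ltn0.
case aG: (all (mem VG) s); first exact: cyc_G (ltnW ss) cs aG.
case aH: (all (mem VH) s); first exact: cyc_H (ltnW ss) cs aH.
move/negbT/allPn: aG => [h hs hG]; move/negbT/allPn: aH => [g gs gH].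
apply: (mixed _ us ss cs gs gH hs hG) => s' u' s3 c' lt.
by apply: IHn => //; rewrite -ltnS; apply: leq_trans lt cnt.
Qed.

Lemma gsb_edge B : gsb B -> exists a b, [/\ a \in B, b \in B & eS a b].
Proof.
move=> [bB cB]; have [[_ cn] _] := block_conn bB.
move/card_gt1P: cB => [a [b [aB bB' ab]]].
move: (cn a b aB bB') => /connectP [p pp lp].
case: p pp lp => [|c p] /=; first by move=> _ E; move: ab; rewrite E eqxx.
move=> /andP[/and3P[_ cB' e] _] _.
by exists a, c.
Qed.

Lemma gsb_two B : gsb B -> exists a b, [/\ a \in B, b \in B & a != b].
Proof. by move=> [_ /card_gt1P]. Qed.

Lemma piece_connK P : piece P -> conn_nocut P K.
Proof.
case=> hP; apply: conn_nocut_mono (block_conn hP) => x y _ _ e; rewrite /K /sum_rel /= e ?orbT //.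
Qed.

Lemma piece_sub P : piece P -> P \subset VG :|: VH.
Proof.
case=> hP; apply: subset_trans (block_subV hP) _; [exact: subsetUl | exact: subsetUr].
Qed.

Lemma piece_Sblock P a b : piece P -> a \in P -> b \in P -> eS a b ->
  is_S_block VG eG S P \/ is_S_block VH eH S P.
Proof.
move=> [hP|hP] aP bP /and3P[aS bS e].
  by left; split => //; exists a, b; split.
by right; split => //; exists a, b; split => //; rewrite -agree.
Qed.

Lemma exit (X W : {set T}) y p : path (irel X K) y p -> y \notin W -> last y p \in W ->
  exists w d, [/\ w \in W, w \in X, connect (irel (X :\: W) K) y d, d \in X :\: W & K d w].
Proof.
elim: p y => [|z p IH] y /=; first by move=> _ /negbTE ->.
move=> /andP[/and3P[yX zX kyz] pp] yW lW.
case zW: (z \in W).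
  exists z, y; split; [by rewrite zW | done | exact: connect0 | by rewrite inE yW yX | done].
have [w [d [wW wX cd dX kdw]]] := IH z pp (negbT zW) lW.
exists w, d; split => //.
apply: connect_trans cd; apply: connect1.
by rewrite /irel /= !inE yW zW yX zX kyz.
Qed.

Section Main.
Variable (A : Type) (gf : {set T} -> A).
Hypothesis hg : forall B1 B2, is_block S (irel S eG) B1 -> 1 < #|B1| ->
                 is_block S (irel S eG) B2 -> 1 < #|B2| ->
     (exists X, [/\ is_S_block VG eG S X, B1 \subset X & B2 \subset X]) \/
     (exists X, [/\ is_S_block VH eH S X, B1 \subset X & B2 \subset X]) ->
     gf B1 = gf B2.
Variables (F B1 : {set T}).
Hypothesis hF : is_block (VG :|: VH) K F.
Hypothesis hB1 : gsb B1.
Hypothesis sB1F : B1 \subset F.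
Variable P1 : {set T}.
Hypothesis bP1 : is_block VG eG P1.
Hypothesis sB1P1 : B1 \subset P1.

Lemma gsb_in_S P B : gsb B -> piece P -> B \subset P ->
  is_S_block VG eG S P \/ is_S_block VH eH S P.
Proof.
move=> gB pP sBP; have [a [b [aB bB e]]] := gsb_edge gB.
by apply: piece_Sblock pP (subsetP sBP _ aB) (subsetP sBP _ bB) e.
Qed.

Lemma hg' P B B' : gsb B -> gsb B' -> piece P -> B \subset P -> B' \subset P -> gf B = gf B'.
Proof.
move=> gB gB' pP sB sB'; have [[b1 c1] [b2 c2]] := (gB, gB').
apply: hg => //; case: (gsb_in_S gB pP sB) => h; [left|right]; by exists P.
Qed.

Definition Inv P := [/\ piece P, P \subset F & forall B, gsb B -> B \subset P -> gf B = gf B1].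

Lemma sub_F P B : piece P -> gsb B -> B \subset P -> B \subset F -> P \subset F.
Proof.
move=> pP gB sBP sBF; have [a [b [aB bB ab]]] := gsb_two gB.
apply: (block_sub hF (piece_connK pP) (piece_sub pP)) ab.
- exact: (subsetP sBF).
- exact: (subsetP sBP).
- exact: (subsetP sBF).
- exact: (subsetP sBP).
Qed.

Lemma Inv_P1 : Inv P1.
Proof.
have pP1 : piece P1 by left.
split => //; first exact: sub_F pP1 hB1 sB1P1 sB1F.
by move=> B gB sB; apply: hg' gB hB1 pP1 sB sB1P1.
Qed.

Lemma Inv_step P Q : Inv P -> link P Q -> Inv Q.
Proof.
move=> [pP sPF hP] /pbP [_ [pQ [B0 [gB0 [sP sQ]]]]].
split => //; first exact: sub_F pQ gB0 sQ (subset_trans sP sPF).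
move=> B gB sB; rewrite -(hP B0 gB0 sP); exact: hg' gB gB0 pQ sB sQ.
Qed.

Lemma Inv_reach P : connect link P1 P -> Inv P.
Proof.
move=> /connectP [ps pth ->].
have gen : forall R ps', Inv R -> path link R ps' -> Inv (last R ps').
  move=> R ps'; elim: ps' R => [|Q ps' IH] R hR //= /andP[l pth'].
  exact: IH (Inv_step hR l) pth'.
exact: gen Inv_P1 pth.
Qed.

Definition RK : rel T := fun x y => K x y && [exists P, connect link P1 P && (x \in P) && (y \in P)].

Lemma RK_sym : symmetric RK.
Proof.
move=> x y; rewrite /RK symK; congr (_ && _); apply/existsP/existsP => -[P /andP[/andP[h1 h2] h3]];
  by exists P; rewrite h1 h2 h3.
Qed.

Lemma RK_in_piece P x y : connect link P1 P -> x \in P -> y \in P -> connect RK x y.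
Proof.
move=> rP xP yP; have [pP _ _] := Inv_reach rP.
have [[_ cP] _] := piece_connK pP.
apply: connect_mono (cP x y xP yP) => u v /and3P[uP vP e].
by rewrite /RK e /=; apply/existsP; exists P; rewrite rP uP vP.
Qed.

Definition U := \bigcup_(P | connect link P1 P) P.

Lemma inU x : reflect (exists2 P, connect link P1 P & x \in P) (x \in U).
Proof. exact: bigcupP. Qed.

Lemma U_F : U \subset F.
Proof.
apply/subsetP => x /inU [P rP xP]; have [_ sPF _] := Inv_reach rP.
exact: (subsetP sPF).
Qed.

Lemma RK_U x y : RK x y -> (x \in U) && (y \in U).
Proof.
move=> /andP[_ /existsP [P /andP[/andP[rP xP] yP]]].
by apply/andP; split; apply/inU; exists P.
Qed.

Lemma U_conn a0 : a0 \in P1 -> forall x, x \in U -> connect RK a0 x.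
Proof.
move=> a0P1 x /inU [P rP xP].
have gen : forall ps R, connect link P1 R -> (forall z, z \in R -> connect RK a0 z) ->
    path link R ps -> forall z, z \in last R ps -> connect RK a0 z.
  elim=> [|Q ps IH] R rR hR //= /andP[l pth].
  have rQ : connect link P1 Q := connect_trans rR (connect1 l).
  apply: (IH Q rQ _ pth) => z zQ.
  move/pbP: l => [_ [_ [B0 [gB0 [sP sQ]]]]].
  have [b0 [_ [b0B _ _]]] := gsb_two gB0.
  apply: connect_trans (hR b0 (subsetP sP _ b0B)) _.
  exact: RK_in_piece rQ (subsetP sQ _ b0B) zQ.
move: rP => /connectP [ps pth lps].
apply: (gen ps P1 (connect0 _ _)) => //; last by rewrite -lps.
by move=> z zP1; apply: RK_in_piece (connect0 _ _) a0P1 zP1.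
Qed.

Lemma RK_path_U x p : path RK x p -> p != [::] -> {subset x :: p <= U}.
Proof.
elim: p x => [|y p IH] x //= /andP[r pth] _ z.
have /andP[xU yU] := RK_U r.
rewrite inE => /orP[/eqP->//|].
case: p IH pth => [|w p] IH pth; first by rewrite inE => /eqP->.
exact: IH.
Qed.

Lemma F_U : F \subset U.
Proof.
have [a [b [aB bB ab]]] := gsb_two hB1.
have aP1 := subsetP sB1P1 _ aB; have bP1' := subsetP sB1P1 _ bB.
have reach1 : connect link P1 P1 := connect0 _ _.
have aU : a \in U by apply/inU; exists P1.
have bU : b \in U by apply/inU; exists P1.
have aF := subsetP sB1F _ aB; have bF := subsetP sB1F _ bB.
apply/subsetP => y yF; apply/negPn/negP => yU.
have [[_ cF] ncF] := block_conn hF.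
have /connectP [p1 pp1 lp1] := cF y a yF aF.
have lp1' : last y p1 \in U by rewrite -lp1.
have [w1 [d1 [w1U w1F cd1 d1X k1]]] := exit pp1 yU lp1'.
pose c := if a == w1 then b else a.
have cw1 : c != w1 by rewrite /c; case: (a =P w1) => [<-|/eqP //]; rewrite eq_sym.
have cU : c \in U by rewrite /c; case: ifP.
have cFw : c \in F :\ w1 by rewrite in_setD1 cw1 /c; case: ifP.
have yw1 : y != w1 by apply/eqP => E; move: yU; rewrite E w1U.
have yFw : y \in F :\ w1 by rewrite in_setD1 yw1 yF.
have /connectP [p2 pp2 lp2] := ncF w1 w1F y c yFw cFw.
have lp2' : last y p2 \in U by rewrite -lp2.
have [w2 [d2 [w2U w2F cd2 d2X k2]]] := exit pp2 yU lp2'.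
have w21 : w2 != w1 by move: w2F; rewrite in_setD1 => /andP[].
have cd2' : connect (irel (F :\: U) K) y d2.
  apply: connect_irel_mono cd2 => //; apply: setSD; exact: subD1set.
have symI := connect_irel_sym (F :\: U) symK.
have cdd : connect (irel (F :\: U) K) d1 d2 by apply: connect_trans cd2'; rewrite symI.
move: cdd => /connectP [E0 pE0 lE0]; move: lE0; case/shortenP: pE0 => E pE uE _ lE.
have sym2 := sym_connect_sym RK_sym.
have cww : connect RK w2 w1 by apply: connect_trans (U_conn aP1 w1U); rewrite sym2; apply: U_conn.
move: cww => /connectP [R0 pR0 lR0]; move: lR0; case/shortenP: pR0 => R pR uR _ lR.
case/lastP: R pR uR lR => [|R' w] pR uR lR; first by move: w21; rewrite lR eqxx.
rewrite last_rcons in lR; subst w.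
have EU : {subset d1 :: E <= F :\: U}.
  move=> z zE; have := path_connect pE zE => cz.
  exact: connect_in d1X cz.
have RU : {subset w2 :: R' <= U}.
  move=> z zR; apply: (RK_path_U pR); first by rewrite -size_eq0 size_rcons.
  by rewrite inE mem_rcons inE; move: zR; rewrite inE => /orP[->|->]; rewrite ?orbT.
set s := w1 :: d1 :: E ++ w2 :: R'.
have us : uniq s.
  have e1 : w1 \notin d1 :: E by apply/negP => /EU; rewrite inE w1U.
  have e2 : w1 \notin w2 :: R' by move: uR; rewrite -rcons_cons rcons_uniq => /andP[].
  have e3 : uniq (w2 :: R') by move: uR; rewrite -rcons_cons rcons_uniq => /andP[].
  have e4 : ~~ has (mem (d1 :: E)) (w2 :: R').
    apply/hasPn => z zR; apply/negP => zE.
    by have := EU _ zE; rewrite inE (RU _ zR).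
  by rewrite /s -cat_cons cons_uniq mem_cat negb_or e1 e2 cat_uniq uE e3 e4.
have cs : cycle K s.
  rewrite /s /cycle rcons_cons rcons_cat /= symK k1 /=.
  rewrite cat_path; apply/andP; split.
    by apply: sub_path pE => u v /and3P[].
  rewrite -lE /= k2 /=.
  by apply: sub_path pR => u v /andP[].
have ss : 3 <= size s by rewrite /s /= size_cat /= addnS !ltnS.
have [R1 HR1] := CL us ss cs (leqnn _).
have k1' : K w1 d1 by rewrite symK.
have [P0 hP0] := edge_piece k1'.
have c1 : connect link P0 R1.
  apply: HR1 hP0.
  change ((w1, d1) \in pp (w1 :: rcons (d1 :: E ++ w2 :: R') w1)).
  by rewrite rcons_cons mem_head.
have rw2 : RK w2 (head w1 R') by move: pR; case: (R') => [|r R''] /= /andP[].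
move: (rw2) => /andP[_ /existsP [Q /andP[/andP[rQ w2Q] rQ']]].
have [pQ _ _] := Inv_reach rQ.
have c2 : connect link Q R1.
  apply: (HR1 w2 (head w1 R')); last by split.
  change ((w2, head w1 R') \in pp (w1 :: rcons (d1 :: E ++ w2 :: R') w1)).
  rewrite rcons_cons rcons_cat -cat_cons -cat_cons pp_cat mem_cat; apply/orP; right.
  by case: (R') => [|r R''] /=; rewrite mem_head.
have rP0 : connect link P1 P0.
  apply: connect_trans rQ _; apply: connect_trans c2 _.
  by rewrite connect_link_sym.
have d1U : d1 \in U by apply/inU; exists P0 => //; case: hP0 => _ [].
by move: d1X; rewrite inE d1U.
Qed.

Lemma B2_reach B2 Q2 : gsb B2 -> B2 \subset F -> is_block VG eG Q2 -> B2 \subset Q2 ->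
  connect link P1 Q2.
Proof.
move=> gB2 sB2F bQ2 sB2Q2.
have pQ2 : piece Q2 by left.
have [a2 [b2 [aB bB e]]] := gsb_edge gB2.
have ab := irrG (eS_eG e).
have [a [_ [aB1 _ _]]] := gsb_two hB1.
have aP1 := subsetP sB1P1 _ aB1.
have a2U : a2 \in U by apply: (subsetP F_U); apply: (subsetP sB2F).
have b2U : b2 \in U by apply: (subsetP F_U); apply: (subsetP sB2F).
have cba : connect RK b2 a2.
  by apply: connect_trans (U_conn aP1 a2U); rewrite (sym_connect_sym RK_sym); apply: U_conn.
move: cba => /connectP [R0 pR0 lR0]; move: lR0; case/shortenP: pR0 => R pR uR _ lR.
case/lastP: R pR uR lR => [|R' w] pR uR lR; first by move: ab; rewrite lR eqxx.
rewrite last_rcons in lR; subst w.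
case: R' pR uR => [|r R'] pR uR.
  move: pR => /= /andP[/andP[_ /existsP [Q /andP[/andP[rQ bQ] aQ]]] _].
  have [pQ _ _] := Inv_reach rQ.
  have sBQ : B2 \subset Q by apply: (gsb_sub gB2 pQ aB bB aQ bQ ab).
  apply: connect_trans rQ (connect1 _); apply/pbP; split => //; split => //.
  by exists B2.
set s := a2 :: b2 :: r :: R'.
have us : uniq s.
  by move: uR; rewrite /s -!rcons_cons rcons_uniq.
have kab : K a2 b2 by rewrite /K /sum_rel /= (eS_eG e).
have cs : cycle K s.
  change (path K a2 (rcons (b2 :: r :: R') a2)).
  rewrite rcons_cons; apply/andP; split => //.
  by apply: sub_path pR => u v /andP[].
have [R1 HR1] := CL us (isT : 3 <= size s) cs (leqnn _).
have c1 : connect link Q2 R1.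
  apply: (HR1 a2 b2); last by split => //; split; apply: (subsetP sB2Q2).
  change ((a2, b2) \in pp (a2 :: rcons (b2 :: r :: R') a2)); by rewrite rcons_cons mem_head.
move: pR => /= /andP[rbr _].
move: (rbr) => /andP[_ /existsP [Q /andP[/andP[rQ bQ] rQ']]].
have [pQ _ _] := Inv_reach rQ.
have c2 : connect link Q R1.
  apply: (HR1 b2 r); last by split.
  change ((b2, r) \in pp (a2 :: rcons (b2 :: r :: R') a2)).
  by rewrite !rcons_cons /= !inE eqxx orbT.
apply: connect_trans rQ _; apply: connect_trans c2 _; by rewrite connect_link_sym.
Qed.

End Main.

Lemma final (A : Type) (gf : {set T} -> A) :
  (forall B1 B2, is_block S (irel S eG) B1 -> 1 < #|B1| ->
                 is_block S (irel S eG) B2 -> 1 < #|B2| ->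
     (exists X, [/\ is_S_block VG eG S X, B1 \subset X & B2 \subset X]) \/
     (exists X, [/\ is_S_block VH eH S X, B1 \subset X & B2 \subset X]) ->
     gf B1 = gf B2) ->
  forall F B1 B2,
    is_S_block (VG :|: VH) (sum_rel eG eH) S F ->
    is_block S (irel S eG) B1 -> 1 < #|B1| ->
    is_block S (irel S eG) B2 -> 1 < #|B2| ->
    B1 \subset F -> B2 \subset F ->
    gf B1 = gf B2.
Proof.
move=> hg F B1 B2 [hF _] bB1 cB1 bB2 cB2 sB1F sB2F.
have gB1 : gsb B1 by split.
have gB2 : gsb B2 by split.
have cG B : gsb B -> conn_nocut B eG.
  by move=> [bB _]; apply: conn_nocut_mono (block_conn bB) => x y _ _; apply: eS_eG.
have sG B : gsb B -> B \subset VG.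
  by move=> [bB _]; apply: subset_trans (block_subV bB) SG.
have [P1 [bP1 sP1]] := block_ext (cG _ gB1) (sG _ gB1).
have [Q2 [bQ2 sQ2]] := block_ext (cG _ gB2) (sG _ gB2).
have r := B2_reach hg hF gB1 sB1F bP1 sP1 gB2 sB2F bQ2 sQ2.
have [_ _ h] := Inv_reach hg hF gB1 sB1F bP1 sP1 r.
by rewrite (h B2 gB2 sQ2).
Qed.

End Aux.

Unset Implicit Arguments.

Theorem lemma3p5 (A : Type) (T : finType) (d : nat)
  (VG : {set T}) (eG : rel T) (lG : T -> 'I_d)
  (VH : {set T}) (eH : rel T) (lH : T -> 'I_d)
  (S : {set T}) (g : {set T} -> A) :
  (* (G,S) and (H,S) are d-labeled boundaried graphs *)
  graph_wf VG eG -> graph_wf VH eH ->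
  S \subset VG -> S \subset VH ->
  block_labeling VG eG lG -> block_labeling VH eH lH ->
  (* compatibility *)
  VG :&: VH \subset S ->
  {in S &, forall x y, eG x y = eH x y} ->
  {in S, forall x, lG x = lH x} ->
  (* (i) every S-block of G or of H is chordal *)
  (forall X, is_S_block VG eG S X -> chordal X eG) ->
  (forall X, is_S_block VH eH S X -> chordal X eH) ->
  (* (ii) Aux(G,S) (+) Aux(H,S) has no cycles *)
  aux_sum_acyclic VG eG VH eH S ->
  (* (iii) g constant on blocks of G[S] (>= 2 vertices) lying in a common
     S-block of G or of H *)
  (forall B1 B2, is_block S (irel S eG) B1 -> 1 < #|B1| ->
                 is_block S (irel S eG) B2 -> 1 < #|B2| ->
     (exists X, [/\ is_S_block VG eG S X, B1 \subset X & B2 \subset X]) \/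
     (exists X, [/\ is_S_block VH eH S X, B1 \subset X & B2 \subset X]) ->
     g B1 = g B2) ->
  forall F B1 B2,
    is_S_block (VG :|: VH) (sum_rel eG eH) S F ->
    is_block S (irel S eG) B1 -> 1 < #|B1| ->
    is_block S (irel S eG) B2 -> 1 < #|B2| ->
    B1 \subset F -> B2 \subset F ->
    g B1 = g B2.
Proof.
move=> wfG wfH SG SH _ _ GHS agree _ _ _ acyc hg.
exact: (final wfG wfH SG SH GHS agree acyc hg).
Qed.
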